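(* Let $f:\{0,1\}^n\times\{0,1\}^n\to\{0,1\}$ and let $C^0,C^1$ be Clifford unitaries on $n_A$ qubits. Given $n_A$ copies of a perfect $f$-Bell oracle, the $f$-Clifford-measure task for $(f,C^0,C^1)$ can be implemented perfectly.
   Context: Tasks are performed in non-local quantum computation form: Alice holds $x$ (and any quantum input), Bob holds $y$; local operations, one simultaneous round of communication, local operations; Alice outputs register $Z$, Bob outputs $Z'$. $f$-Bell: Alice holds a two-qubit system; target channel $\mathcal{B}^{f(x,y)}$ with $\mathcal{B}^0(\rho)=\sum_{a,b}\langle a,b|\rho|a,b\rangle|a,b\rangle\langle a,b|_Z\otimes|a,b\rangle\langle a,b|_{Z'}$ and $\mathcal{B}^1(\rho)=\sum_{a,b}\langle\Psi_{a,b}|\rho|\Psi_{a,b}\rangle|a,b\rangle\langle a,b|_Z\otimes|a,b\rangle\langle a,b|_{Z'}$, $\{|\Psi_{a,b}\rangle\}$ the Bell basis. $f$-Clifford-measure for $(f,C^0,C^1)$: Alice holds an $n_A$-qubit system $A$; the target channel is $\mathcal{M}^{C^{f(x,y)}}$ where $\mathcal{M}^{C}(\rho_A)=\sum_{b\in\{0,1\}^{n_A}}\langle b|C^\dagger\rho C|b\rangle\,|b\rangle\langle b|_Z\otimes|b\rangle\langle b|_{Z'}$. A perfect oracle is a black-box exact implementation of the task, used in parallel on the same classical inputs $x,y$; ''implemented perfectly'' means the resulting channel equals the target channel for every $(x,y)$. *)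

(* Defs.v *)
(* Finite-dimensional quantum mechanics over an arbitrary
   numClosedFieldType C (e.g. complex numbers R[i]); operators on the space
   with basis the finite type I, valued in the space with basis J, are
   functions J -> I -> C (row index first). *)
From HB Require Import structures.
From mathcomp Require Import all_boot all_order all_algebra.
Set Implicit Arguments. Unset Strict Implicit. Unset Printing Implicit Defensive.
Import Order.TTheory GRing.Theory Num.Theory.
Local Open Scope ring_scope.

Definition bits (n : nat) := {ffun 'I_n -> bool}.

Section Quantum.
Variable C : numClosedFieldType.

Record channel (I J : finType) := Channel {
  ch_env : finType;
  ch_kraus : ch_env -> J -> I -> C;
  ch_tp : forall i i' : I,
    \sum_(e : ch_env) \sum_(j : J) (ch_kraus e j i)^* * ch_kraus e j i'
      = (i == i')%:R }.

(* Pauli operator X^a Z^b on n qubits (tensor product over the qubits). *)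
Definition pauli (n : nat) (a b : bits n) (r s : bits n) : C :=
  \prod_(i < n) ((r i == xorb (s i) (a i))%:R * (-1) ^+ (b i && s i)).

(* Clifford unitary on n qubits: a unitary normalizing the Pauli group
   {c X^a Z^b | c in {1,-1,i,-i}}. *)
Definition clifford (n : nat) (U : bits n -> bits n -> C) : Prop :=
  (forall q q' : bits n, \sum_(r : bits n) (U r q)^* * U r q' = (q == q')%:R) /\
  (forall a b : bits n, exists (c : C) (a' b' : bits n),
     c ^+ 4 = 1 /\
     forall r s : bits n,
       \sum_(p : bits n) \sum_(q : bits n) U r p * pauli a b p q * (U s q)^*
         = c * pauli a' b' r s).

(* Computational basis vector |a,b> (f-value false) or Bell vector
   |Psi_{a,b}> = (|0,a> + (-1)^b |1,1+a>)/sqrt 2 (f-value true), as a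
   function of the two-qubit basis index (s,t). *)
Definition bell_vec (g : bool) (ab st : (bool * bool)%type) : C :=
  if ~~ g then (st == ab)%:R
  else (sqrtC 2)^-1 *
       ((st == (false, ab.1))%:R + (-1) ^+ ab.2 * (st == (true, ~~ ab.1))%:R).

(* m parallel copies of the f-Bell oracle: input system = m two-qubit
   systems, outcome o in ({0,1}^2)^m; the measurement vector for outcome o. *)
Definition bell_oracle_vec (m : nat) (g : bool)
    (o : {ffun 'I_m -> (bool * bool)%type}) (st : {ffun 'I_m -> (bool * bool)%type}) : C :=
  \prod_(i < m) bell_vec g (o i) (st i).

(* A non-local protocol (one simultaneous round) in which the parties use,
   during the communication round, an oracle that measures an Alice-held
   system OI and hands the classical outcome o : O to both parties.
   Alice holds x : X and the quantum input QA; Bob holds y : Y.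
   - shared pure resource state psi on RA * RB;
   - Alice's first local channel (depending on x) maps QA*RA to
     (oracle input OI * message MA) * kept KA;
   - Bob's first local channel (depending on y) maps RB to message MB * kept KB;
   - messages are exchanged and the oracle outcome o is delivered to both;
   - Alice's final channel (depending on x,o) maps KA*MB to output Z;
     Bob's final channel (depending on y,o) maps KB*MA to output Z'. *)
Record oprotocol (X Y QA OI O Z Z' : finType) := OProtocol {
  RA : finType; RB : finType; MA : finType; MB : finType;
  KA : finType; KB : finType;
  psi : RA -> RB -> C;
  psi_norm : \sum_(ra : RA) \sum_(rb : RB) psi ra rb * (psi ra rb)^* = 1;
  A1 : X -> channel (QA * RA)%type ((OI * MA) * KA)%type;
  B1 : Y -> channel RB (MB * KB)%type;
  A2 : X -> O -> channel (KA * MB)%type Z;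
  B2 : Y -> O -> channel (KB * MA)%type Z'
}.

Section Output.
Variables (X Y QA OI O Z Z' : finType) (P : oprotocol X Y QA OI O Z Z').
(* oracle: for oracle parameter g (= f(x,y)), measurement vectors v g o *)
Variables (fv : X -> Y -> bool) (v : bool -> O -> OI -> C).

Definition oprot_kraus (x : X) (y : Y)
    (e1 : ch_env (A1 P x)) (e2 : ch_env (B1 P y)) (o : O)
    (e3 : ch_env (A2 P x o)) (e4 : ch_env (B2 P y o))
    (zz : (Z * Z')%type) (qa : QA) : C :=
  \sum_(ra : RA P) \sum_(rb : RB P) \sum_(oi : OI) \sum_(ma : MA P)
  \sum_(ka : KA P) \sum_(mb : MB P) \sum_(kb : KB P)
    ch_kraus e3 zz.1 (ka, mb) * ch_kraus e4 zz.2 (kb, ma)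
    * (v (fv x y) o oi)^*
    * ch_kraus e1 ((oi, ma), ka) (qa, ra) * ch_kraus e2 (mb, kb) rb
    * psi ra rb.

Definition oprot_output (x : X) (y : Y) (rho : QA -> QA -> C)
    (zz ww : (Z * Z')%type) : C :=
  \sum_(e1 : ch_env (A1 P x)) \sum_(e2 : ch_env (B1 P y)) \sum_(o : O)
  \sum_(e3 : ch_env (A2 P x o)) \sum_(e4 : ch_env (B2 P y o))
  \sum_(qa : QA) \sum_(qa' : QA)
    oprot_kraus e1 e2 e3 e4 zz qa * rho qa qa' * (oprot_kraus e1 e2 e3 e4 ww qa')^*.
End Output.

(* The target channel M^U: measure in basis {U|b>}, copy b to Z and Z'. *)
Definition clifford_measure (n : nat) (U : bits n -> bits n -> C)
    (rho : bits n -> bits n -> C) (zz ww : (bits n * bits n)%type) : C :=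
  \sum_(b : bits n)
    ((zz.1 == b) && (zz.2 == b) && (ww.1 == b) && (ww.2 == b))%:R *
    (\sum_(q : bits n) \sum_(q' : bits n) (U q b)^* * rho q q' * U q' b).

End Quantum.

(* Main.v *)
Require Import Defs.
From HB Require Import structures.
From mathcomp Require Import all_boot all_order all_algebra.
From mathcomp Require Import ring.
From Stdlib Require Import ClassicalEpsilon.
Set Implicit Arguments. Unset Strict Implicit. Unset Printing Implicit Defensive.
Import Order.TTheory GRing.Theory Num.Theory.
Local Open Scope ring_scope.

(* Protocol: Alice applies C0^dagger to her input, pairs each
   qubit with an ancilla prepared in conj(C0^dagger C1 |k>) for uniformly
   random k (sent to Bob), and feeds the 2nA qubits to the f-Bell oracle.
   Computational outcome => C0-measurement; Bell outcome => C1-measurement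
   (via the Clifford property), classically post-processed. *)



Lemma sum_delta (C : numClosedFieldType) (I : finType) (j : I) (F : I -> C) :
  \sum_i (i == j)%:R * F i = F j.
Proof.
rewrite (bigD1 j) //= eqxx mul1r big1 ?addr0 // => i /negPf ->; by rewrite mul0r.
Qed.

Lemma sum_delta' (C : numClosedFieldType) (I : finType) (j : I) (F : I -> C) :
  \sum_i (j == i)%:R * F i = F j.
Proof. by under eq_bigr do rewrite eq_sym; apply: sum_delta. Qed.

Lemma sum_unit (C : numClosedFieldType) (F : unit -> C) : \sum_(i : unit) F i = F tt.
Proof. by rewrite (bigD1 tt) //= big1 ?addr0 // => -[]. Qed.

Lemma unit_mod (C : numClosedFieldType) (c : C) : c ^+ 4 = 1 -> c * c^* = 1.
Proof.
move=> h; rewrite -normCK.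
have h1 : `|c| ^+ 4 = 1 ^+ 4 by rewrite -normrX h normr1 expr1n.
have := pexpIrn (isT : (0 < 4)%N) _ _ h1.
by move=> /(_ (normr_ge0 _) ler01) ->; rewrite expr1n.
Qed.

Definition mm (C : numClosedFieldType) (T : finType) (A B : T -> T -> C) r s :=
  \sum_p A r p * B p s.

Lemma sum_enum (C : numClosedFieldType) (T : finType) (F : T -> C) :
  \sum_(l < #|T|) F (enum_val l) = \sum_r F r.
Proof. by rewrite -(big_enum_val (A := T)). Qed.

Definition mxof (C : numClosedFieldType) (T : finType) (U : T -> T -> C) : 'M[C]_#|T| :=
  \matrix_(i, j) U (enum_val i) (enum_val j).

Lemma unitary_r (C : numClosedFieldType) (T : finType) (U : T -> T -> C) :
  (forall q q', \sum_r (U r q)^* * U r q' = (q == q')%:R) ->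
  forall q q', \sum_r U q r * (U q' r)^* = (q == q')%:R.
Proof.
move=> hU q q'.
have h1 : mxof (fun a b => (U b a)^*) *m mxof U = 1%:M.
  apply/matrixP => i j; rewrite /mxof !mxE.
  under eq_bigr do rewrite !mxE.
  rewrite (sum_enum (fun r => (U r (enum_val i))^* * U r (enum_val j))) hU.
  by rewrite (inj_eq enum_val_inj).
have := mulmx1C h1 => /matrixP /(_ (enum_rank q) (enum_rank q')).
rewrite /mxof !mxE (inj_eq enum_rank_inj) => <-.
symmetry. under eq_bigr do rewrite !mxE !enum_rankK.
by rewrite (sum_enum (fun r => U q r * (U q' r)^*)).
Qed.



Definition FF (m : nat) := {ffun 'I_m -> (bool * bool)%type}.
Definition fA m (o : FF m) : bits m := [ffun i => (o i).1].
Definition fE m (o : FF m) : bits m := [ffun i => (o i).2].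
Definition fJ m (a t : bits m) : FF m := [ffun i => (a i, t i)].
Definition xorf m (a b : bits m) : bits m := [ffun i => xorb (a i) (b i)].
Definition sgnf (C : numClosedFieldType) m (b s : bits m) : C :=
  \prod_(i < m) (-1) ^+ (b i && s i).

Lemma sum_pair (C : numClosedFieldType) (A B : finType) (F : (A * B)%type -> C) :
  \sum_p F p = \sum_a \sum_b F (a, b).
Proof. by rewrite pair_bigA; apply: eq_bigr => -[]. Qed.

Lemma sum_FF (C : numClosedFieldType) m (G : FF m -> C) :
  \sum_o G o = \sum_a \sum_t G (fJ a t).
Proof.
rewrite pair_bigA /=.
rewrite (reindex (fun p : (bits m * bits m)%type => fJ p.1 p.2)) //=.
exists (fun o => (fA o, fE o)) => [[a t] _|o _] /=.
  by congr pair; apply/ffunP => i; rewrite !ffunE.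
by apply/ffunP => i; rewrite !ffunE; case: (o i).
Qed.

Lemma sum_single (C : numClosedFieldType) (I : finType) (j : I) (F : I -> C) :
  (forall i, i != j -> F i = 0) -> \sum_i F i = F j.
Proof. by move=> h; rewrite (bigD1 j) //= big1 ?addr0. Qed.

Lemma prod_eq_nat (C : numClosedFieldType) m (K : finType) (r s : {ffun 'I_m -> K}) :
  \prod_(i < m) ((r i == s i)%:R : C) = (r == s)%:R.
Proof.
have [->|ne] := eqVneq r s.
  by rewrite big1 // => i _; rewrite eqxx.
have : ~~ [forall i, r i == s i].
  apply: contra ne => /forallP h; apply/eqP/ffunP => i; exact/eqP/h.
by case/forallPn => i /negPf hi; rewrite (bigD1 i) //= hi mul0r.
Qed.

Lemma pauliE (C : numClosedFieldType) m (a b r s : bits m) :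
  pauli C a b r s = (r == xorf s a)%:R * sgnf C b s.
Proof.
rewrite /pauli big_split; congr (_ * _); rewrite -(prod_eq_nat C).
by apply: eq_bigr => i _; rewrite ffunE.
Qed.

Lemma bell_false (C : numClosedFieldType) m (o oi : FF m) :
  bell_oracle_vec C false o oi = (oi == o)%:R.
Proof. by rewrite /bell_oracle_vec -(prod_eq_nat C). Qed.

Definition sig (C : numClosedFieldType) m : C := (sqrtC 2)^-1 ^+ m.

Lemma bell_true (C : numClosedFieldType) m (o oi : FF m) :
  bell_oracle_vec C true o oi = sig C m * pauli C (fA o) (fE o) (fE oi) (fA oi).
Proof.
rewrite /bell_oracle_vec /pauli /sig.
have -> : ((sqrtC 2)^-1 ^+ m : C) = \prod_(i < m) (sqrtC 2)^-1 by rewrite prodr_const card_ord.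
rewrite -big_split.
apply: eq_bigr => i _; rewrite !ffunE /bell_vec /=.
case: (oi i) => s t; case: (o i) => a b /=; congr (_ * _).
by case: s; case: t; case: a; case: b; rewrite /= ?expr0 ?expr1 ?mulr1 ?mul1r ?mulr0 ?mul0r ?addr0 ?add0r.
Qed.

Lemma conj_sgnf (C : numClosedFieldType) m (b s : bits m) : (sgnf C b s)^* = sgnf C b s.
Proof. by rewrite /sgnf rmorph_prod; apply: eq_bigr => i _; rewrite rmorphXn rmorphN1. Qed.

Lemma conj_pauli (C : numClosedFieldType) m (a b r s : bits m) :
  (pauli C a b r s)^* = pauli C a b r s.
Proof. by rewrite !pauliE rmorphM /= conj_sgnf rmorph_nat. Qed.

Lemma sgnf_um (C : numClosedFieldType) m (b s : bits m) : sgnf C b s * sgnf C b s = 1.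
Proof.
rewrite /sgnf -big_split big1 // => i _.
rewrite /=; case: (_ && _); by rewrite ?expr0 ?expr1 ?mulr1 ?mulN1r ?opprK.
Qed.

Lemma pauli_tr (C : numClosedFieldType) m (a b r s : bits m) :
  pauli C a b s r = sgnf C a b * pauli C a b r s.
Proof.
rewrite /pauli /sgnf -!big_split; apply: eq_bigr => i _ /=.
move: (r i) (s i) (a i) (b i) => [] [] [] [];
  rewrite /= ?expr0 ?expr1 ?mulr1 ?mul1r ?mulr0 ?mul0r ?mulN1r ?opprK ?mulrN1 ?oppr0 //.
Qed.



Definition conjP (C : numClosedFieldType) m (U : bits m -> bits m -> C) (a b : bits m) r s :=
  \sum_p \sum_q U r p * pauli C a b p q * (U s q)^*.

Definition unitary (C : numClosedFieldType) (T : finType) (U : T -> T -> C) :=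
  forall q q', \sum_r (U r q)^* * U r q' = (q == q')%:R.

Lemma right_cancel (C : numClosedFieldType) (T : finType) (U M : T -> T -> C) q k :
  unitary U ->
  \sum_r (\sum_p \sum_p' U q p * M p p' * (U r p')^*) * U r k = \sum_p U q p * M p k.
Proof.
move=> hU.
under eq_bigr do rewrite big_distrl /=.
rewrite exchange_big /=; apply: eq_bigr => p _.
under eq_bigr do rewrite big_distrl /=.
rewrite exchange_big /=.
under eq_bigr => p' _ do (under eq_bigr do rewrite -mulrA; rewrite -big_distrr /= hU).
by rewrite (@sum_single _ _ k) ?eqxx ?mulr1 // => i /negPf ->; rewrite mulr0.
Qed.

Lemma assoc3 (C : numClosedFieldType) (T : finType) (U M V : T -> T -> C) q k :
  \sum_a \sum_t U q a * M a t * (\sum_r (U r t)^* * V r k)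
  = \sum_r (\sum_a \sum_t U q a * M a t * (U r t)^*) * V r k.
Proof.
under [RHS]eq_bigr do rewrite big_distrl /=.
rewrite [RHS]exchange_big /=; apply: eq_bigr => a _.
under [RHS]eq_bigr do rewrite big_distrl /=.
rewrite [RHS]exchange_big /=; apply: eq_bigr => t _.
by rewrite big_distrr /=; apply: eq_bigr => r _; rewrite !mulrA.
Qed.

Lemma pauli_col (C : numClosedFieldType) m (U : bits m -> bits m -> C) a b q k :
  \sum_p U q p * pauli C a b p k = sgnf C b k * U q (xorf k a).
Proof.
under eq_bigr do rewrite pauliE mulrCA.
by rewrite sum_delta mulrC.
Qed.

Lemma sandwich (C : numClosedFieldType) m (U : bits m -> bits m -> C) a b p q :
  unitary U ->
  \sum_r \sum_s (U r p)^* * conjP U a b r s * U s q = pauli C a b p q.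
Proof.
move=> hU.
have e : forall r, \sum_s (U r p)^* * conjP U a b r s * U s q =
   (U r p)^* * \sum_p' U r p' * (\sum_s \sum_q' pauli C a b p' q' * (U s q')^* * U s q).
  move=> r; under eq_bigr do rewrite -mulrA; rewrite -big_distrr /=; congr (_ * _).
  rewrite /conjP; under eq_bigr do rewrite big_distrl /=.
  rewrite exchange_big /=; apply: eq_bigr => p' _.
  rewrite big_distrr /=.
  apply: eq_bigr => s _; rewrite !big_distrl big_distrr /=; apply: eq_bigr => q' _.
  by rewrite !mulrA.
under eq_bigr do rewrite e.
under eq_bigr do rewrite big_distrr /=.
rewrite exchange_big /=.
under eq_bigr => p' _ do (under eq_bigr do rewrite mulrA; rewrite -big_distrl /= hU).
rewrite (@sum_single _ _ p) ?eqxx ?mul1r; last by move=> i; rewrite eq_sym => /negPf ->; rewrite mul0r.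
rewrite exchange_big /=.
under eq_bigr => q' _ do (under eq_bigr do rewrite -mulrA; rewrite -big_distrr /= hU).
by rewrite (@sum_single _ _ q) ?eqxx ?mulr1 // => i /negPf ->; rewrite mulr0.
Qed.

Lemma sgnf0 (C : numClosedFieldType) m (b : bits m) : sgnf C b [ffun _ => false] = 1.
Proof. by rewrite /sgnf big1 // => i _; rewrite ffunE andbF expr0. Qed.

Lemma sgnf_e (C : numClosedFieldType) m (b : bits m) i :
  sgnf C b [ffun j => j == i] = (-1) ^+ (b i).
Proof.
rewrite /sgnf (bigD1 i) //= big1 ?mulr1 ?ffunE ?eqxx ?andbT // => j /negPf hj.
by rewrite ffunE hj andbF expr0.
Qed.

Lemma m1_neq1 (C : numClosedFieldType) : (-1 : C) != 1.
Proof.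
apply/negP => /eqP h.
have : (2%:R : C) == 0 by rewrite -[2%N]/(1 + 1)%N natrD -{1}h addNr.
by rewrite pnatr_eq0.
Qed.

Lemma pauli_labels (C : numClosedFieldType) m (a1 b1 a2 b2 : bits m) (c1 c2 : C) :
  c1 != 0 -> c2 != 0 ->
  (forall p q, c2 * pauli C a1 b1 p q = c1 * pauli C a2 b2 p q) -> a1 = a2 /\ b1 = b2.
Proof.
move=> n1 n2 h.
have ea : a1 = a2.
  have := h a1 [ffun _ => false]; rewrite !pauliE !sgnf0.
  have -> : xorf [ffun _ => false] a1 = a1 by apply/ffunP => i; rewrite !ffunE.
  have -> : xorf [ffun _ => false] a2 = a2 by apply/ffunP => i; rewrite !ffunE.
  rewrite eqxx !mulr1; have [//|ne] := eqVneq a1 a2.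
  by rewrite mulr0 => /eqP; rewrite (negPf n2).
subst a2; split => //.
have ec : c2 = c1.
  have := h a1 [ffun _ => false]; rewrite !pauliE !sgnf0.
  have -> : xorf [ffun _ => false] a1 = a1 by apply/ffunP => i; rewrite !ffunE.
  by rewrite eqxx !mulr1.
subst c2; apply/ffunP => i.
have := h (xorf [ffun j => j == i] a1) [ffun j => j == i].
rewrite !pauliE !eqxx !mul1r !sgnf_e => /(mulfI n1).
case: (b1 i); case: (b2 i) => //= /eqP; rewrite ?expr0 ?expr1.
  by rewrite (negPf (m1_neq1 C)).
by rewrite eq_sym (negPf (m1_neq1 C)).
Qed.

Definition clif_prop (C : numClosedFieldType) m (U : bits m -> bits m -> C) a b a' b' c :=
  c ^+ 4 = 1 /\ forall r s, conjP U a b r s = c * pauli C a' b' r s.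

Lemma c4_neq0 (C : numClosedFieldType) (c : C) : c ^+ 4 = 1 -> c != 0.
Proof. by move=> h; apply/negP => /eqP e; move: h; rewrite e expr0n /= => /eqP; rewrite eq_sym oner_eq0. Qed.

Lemma cl_surj (C : numClosedFieldType) m (U : bits m -> bits m -> C) :
  unitary U ->
  (forall a b, exists c a' b', clif_prop U a b a' b' c) ->
  forall a' b', exists a b c, clif_prop U a b a' b' c.
Proof.
move=> hU hc.
have hc' : forall ab : (bits m * bits m)%type, exists ab' : (bits m * bits m)%type,
    exists c, clif_prop U ab.1 ab.2 ab'.1 ab'.2 c.
  by move=> [a b]; have [c [a' [b' h]]] := hc a b; exists (a', b'), c.
pose phi ab := proj1_sig (constructive_indefinite_description _ (hc' ab)).
have phiP ab : exists c, clif_prop U ab.1 ab.2 (phi ab).1 (phi ab).2 c.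
  exact: (proj2_sig (constructive_indefinite_description _ (hc' ab))).
have inj : injective phi.
  move=> [a1 b1] [a2 b2] e.
  have [c1 [h41 h1]] := phiP (a1, b1).
  have [c2 [h42 h2]] := phiP (a2, b2).
  rewrite -e /= in h2; rewrite /= in h1.
  suff H : forall p q, c2 * pauli C a1 b1 p q = c1 * pauli C a2 b2 p q.
    by have [-> ->] := pauli_labels (c4_neq0 h41) (c4_neq0 h42) H.
  move=> p q.
  rewrite -(sandwich a1 b1 p q hU) -(sandwich a2 b2 p q hU).
  under eq_bigr do under eq_bigr do rewrite h1.
  under [in RHS]eq_bigr do under eq_bigr do rewrite h2.
  rewrite !big_distrr /=; apply: eq_bigr => r _; rewrite !big_distrr /=; apply: eq_bigr => s _.
  by rewrite !mulrA [c2 * _]mulrC [c1 * _]mulrC -!mulrA [c1 * (c2 * _)]mulrCA.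
move=> a' b'.
have [g _ ginv] := injF_bij inj.
have [c hc2] := phiP (g (a', b')).
by exists (g (a', b')).1, (g (a', b')).2, c; rewrite ginv in hc2.
Qed.



Definition wv (C : numClosedFieldType) m (C0 C1 : bits m -> bits m -> C) (k t : bits m) :=
  \sum_r (C0 r t)^* * C1 r k.

Lemma um_mul (C : numClosedFieldType) (x y : C) :
  x * x^* = 1 -> y * y^* = 1 -> (x * y) * (x * y)^* = 1.
Proof. by move=> hx hy; rewrite rmorphM /= mulrACA hx hy mulr1. Qed.

Lemma um_inv (C : numClosedFieldType) (x : C) : x * x^* = 1 -> x^-1 * (x^-1)^* = 1.
Proof. by move=> hx; rewrite fmorphV /= -invfM hx invr1. Qed.

Lemma um_sgnf (C : numClosedFieldType) m (b s : bits m) : sgnf C b s * (sgnf C b s)^* = 1.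
Proof. by rewrite conj_sgnf sgnf_um. Qed.

Lemma key_true (C : numClosedFieldType) m (C0 C1 : bits m -> bits m -> C) :
  unitary C1 ->
  (forall a b, exists c a' b', clif_prop C0 a b a' b' c) ->
  (forall a b, exists c a' b', clif_prop C1 a b a' b' c) ->
  forall a b : bits m, exists aQ : bits m, exists nu : bits m -> C,
    (forall k, nu k * (nu k)^* = 1) /\
    forall q k, \sum_a' \sum_t C0 q a' * pauli C a b t a' * wv C0 C1 k t
                = nu k * C1 q (xorf k aQ).
Proof.
move=> hU1 hc0 hc1 a b.
have [c0 [a2 [b2 [h40 h0]]]] := hc0 a b.
have [aQ [bQ [c1 [h41 h1]]]] := cl_surj hU1 hc1 a2 b2.
have n1 := c4_neq0 h41.
exists aQ, (fun k => sgnf C a b * c0 * (c1^-1 * sgnf C bQ k)); split.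
  move=> k; apply: um_mul; first by apply: um_mul; [exact: um_sgnf | exact: unit_mod].
  by apply: um_mul; [apply: um_inv; exact: unit_mod | exact: um_sgnf].
move=> q k.
have e1 : \sum_a' \sum_t C0 q a' * pauli C a b t a' * wv C0 C1 k t
   = sgnf C a b * \sum_a' \sum_t C0 q a' * pauli C a b a' t * wv C0 C1 k t.
  rewrite big_distrr /=; apply: eq_bigr => a' _; rewrite big_distrr /=.
  by apply: eq_bigr => t _; rewrite pauli_tr mulrCA !mulrA.
rewrite e1 /wv assoc3 -!mulrA; congr (_ * _).
have h0' r : \sum_a' \sum_t C0 q a' * pauli C a b a' t * (C0 r t)^* = c0 * pauli C a2 b2 q r.
  exact: h0.
under eq_bigr do rewrite h0' -mulrA.
rewrite -big_distrr /=; congr (_ * _).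
rewrite -pauli_col -(right_cancel _ _ _ hU1).
apply: (mulfI n1); rewrite mulrA mulfV // mul1r big_distrr /=.
apply: eq_bigr => r _.
have h1' : \sum_p \sum_p' C1 q p * pauli C aQ bQ p p' * (C1 r p')^* = c1 * pauli C a2 b2 q r.
  exact: h1.
by rewrite h1' mulrA.
Qed.

Lemma sig_conj (C : numClosedFieldType) m : (sig C m)^* = sig C m.
Proof.
rewrite /sig rmorphXn fmorphV /= conj_Creal //.
by apply: ger0_real; rewrite sqrtC_ge0 ler0n.
Qed.

Lemma sig2 (C : numClosedFieldType) m : sig C m * sig C m * (2 ^ m)%:R = 1.
Proof.
rewrite /sig -exprMn -invfM -expr2 sqrtCK natrX -exprMn mulVf ?expr1n //.
by rewrite pnatr_eq0.
Qed.

Lemma card_bits m : #|{: bits m}| = (2 ^ m)%N.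
Proof. by rewrite card_ffun card_bool card_ord. Qed.

Lemma card_FF m : #|{: FF m}| = (4 ^ m)%N.
Proof. by rewrite card_ffun card_prod card_bool card_ord. Qed.

Lemma sum_const_C (C : numClosedFieldType) (T : finType) (c : C) :
  \sum_(i : T) c = #|{: T}|%:R * c.
Proof. by rewrite sumr_const mulr_natl. Qed.

Lemma w_orth (C : numClosedFieldType) m (C0 C1 : bits m -> bits m -> C) k k' :
  unitary C0 -> unitary C1 ->
  \sum_t (wv C0 C1 k t)^* * wv C0 C1 k' t = (k == k')%:R.
Proof.
move=> h0 h1; have h0r := unitary_r h0.
rewrite -h1 /wv.
under eq_bigr do rewrite rmorph_sum /= big_distrl /=.
rewrite exchange_big /=; apply: eq_bigr => r _.
under eq_bigr do rewrite big_distrr /=.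
rewrite exchange_big /=.
rewrite (@sum_single _ _ r); last first.
  move=> r' ne; under eq_bigr do rewrite rmorphM /= conjCK mulrACA.
  by rewrite -big_distrl /= h0r eq_sym (negPf ne) mul0r.
under eq_bigr do rewrite rmorphM /= conjCK mulrACA.
by rewrite -big_distrl /= h0r eqxx mul1r.
Qed.



Definition amp1 (C : numClosedFieldType) m (C0 C1 : bits m -> bits m -> C)
  (k : bits m) (oi : FF m) (qa : bits m) : C :=
  sig C m * (C0 qa (fA oi))^* * (wv C0 C1 k (fE oi))^*.

Definition Amp (C : numClosedFieldType) m (C0 C1 : bits m -> bits m -> C) (g : bool)
  (k : bits m) (o : FF m) (qa : bits m) : C :=
  \sum_oi (bell_oracle_vec C g o oi)^* * amp1 C0 C1 k oi qa.

Definition keyP (C : numClosedFieldType) m (C0 C1 : bits m -> bits m -> C) (o : FF m)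
  (aQ : bits m) :=
  exists nu : bits m -> C, (forall k, nu k * (nu k)^* = 1) /\
    forall q k, \sum_a' \sum_t C0 q a' * pauli C (fA o) (fE o) t a' * wv C0 C1 k t
                = nu k * C1 q (xorf k aQ).

Definition aQf (C : numClosedFieldType) m (C0 C1 : bits m -> bits m -> C) (o : FF m) : bits m :=
  epsilon (inhabits [ffun _ => false]) (keyP C0 C1 o).

Definition hh (C : numClosedFieldType) m (C0 C1 : bits m -> bits m -> C) (g : bool)
  (o : FF m) (k : bits m) : bits m :=
  if g then xorf k (aQf C0 C1 o) else fA o.

Lemma fAJ m (a t : bits m) : fA (fJ a t) = a.
Proof. by apply/ffunP => i; rewrite !ffunE. Qed.
Lemma fEJ m (a t : bits m) : fE (fJ a t) = t.
Proof. by apply/ffunP => i; rewrite !ffunE. Qed.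

Lemma per_b_false (C : numClosedFieldType) m (C0 C1 : bits m -> bits m -> C) b q q' :
  unitary C0 -> unitary C1 ->
  \sum_k \sum_o (hh C0 C1 false o k == b)%:R *
     (Amp C0 C1 false k o q * (Amp C0 C1 false k o q')^*)
  = (C0 q b)^* * C0 q' b.
Proof.
move=> h0 h1.
have eA k o qa : Amp C0 C1 false k o qa = amp1 C0 C1 k o qa.
  rewrite /Amp; under eq_bigr do rewrite bell_false rmorph_nat.
  exact: sum_delta.
have step k : \sum_o (hh C0 C1 false o k == b)%:R *
     (Amp C0 C1 false k o q * (Amp C0 C1 false k o q')^*)
   = (sig C m * sig C m * ((C0 q b)^* * C0 q' b)) *
      \sum_t (wv C0 C1 k t)^* * wv C0 C1 k t.
  rewrite sum_FF (@sum_single _ _ b); last first.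
    by move=> a ne; apply: big1 => t _; rewrite /hh fAJ (negPf ne) mul0r.
  rewrite big_distrr /=; apply: eq_bigr => t _.
  rewrite /hh fAJ eqxx mul1r !eA /amp1 fAJ fEJ !rmorphM /= !conjCK sig_conj.
  ring.
under eq_bigr do rewrite step w_orth //.
rewrite -big_distrr /=.
under eq_bigr do rewrite eqxx.
rewrite sum_const_C card_bits mulr1 mulrAC sig2 mul1r.
done.
Qed.

Lemma xorf_eq m (k a b : bits m) : (xorf k a == b) = (k == xorf b a).
Proof.
apply/eqP/eqP => [<-|->]; apply/ffunP => i; rewrite !ffunE //.
  by case: (k i); case: (a i).
by case: (b i); case: (a i).
Qed.

Lemma Amp_true_form (C : numClosedFieldType) m (C0 C1 : bits m -> bits m -> C) o :
  unitary C1 ->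
  (forall a b, exists c a' b', clif_prop C0 a b a' b' c) ->
  (forall a b, exists c a' b', clif_prop C1 a b a' b' c) ->
  exists nu : bits m -> C, (forall k, nu k * (nu k)^* = 1) /\
    forall k q, Amp C0 C1 true k o q =
      sig C m * sig C m * (nu k * C1 q (xorf k (aQf C0 C1 o)))^*.
Proof.
move=> h1 hc0 hc1.
have kp : keyP C0 C1 o (aQf C0 C1 o).
  apply: epsilon_spec; exact: (key_true h1 hc0 hc1 (fA o) (fE o)).
have [nu [hnu hk]] := kp; exists nu; split => // k q.
rewrite -hk /Amp sum_FF rmorph_sum big_distrr /=; apply: eq_bigr => a _.
rewrite rmorph_sum big_distrr /=; apply: eq_bigr => t _.
rewrite bell_true /amp1 fAJ fEJ !rmorphM /= conj_pauli sig_conj; ring.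
Qed.

Lemma per_b_true (C : numClosedFieldType) m (C0 C1 : bits m -> bits m -> C) b q q' :
  unitary C1 ->
  (forall a b, exists c a' b', clif_prop C0 a b a' b' c) ->
  (forall a b, exists c a' b', clif_prop C1 a b a' b' c) ->
  \sum_k \sum_o (hh C0 C1 true o k == b)%:R *
     (Amp C0 C1 true k o q * (Amp C0 C1 true k o q')^*)
  = (C1 q b)^* * C1 q' b.
Proof.
move=> h1 hc0 hc1.
rewrite exchange_big /=.
have step o : \sum_k (hh C0 C1 true o k == b)%:R *
     (Amp C0 C1 true k o q * (Amp C0 C1 true k o q')^*)
   = (sig C m * sig C m) * (sig C m * sig C m) * ((C1 q b)^* * C1 q' b).
  have [nu [hnu hA]] := Amp_true_form o h1 hc0 hc1.
  rewrite (@sum_single _ _ (xorf b (aQf C0 C1 o))); last first.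
    by move=> k ne; rewrite /hh xorf_eq (negPf ne) mul0r.
  rewrite /hh xorf_eq eqxx mul1r !hA.
  have -> : xorf (xorf b (aQf C0 C1 o)) (aQf C0 C1 o) = b.
    by apply/eqP; rewrite xorf_eq.
  rewrite !rmorphM /= !conjCK sig_conj.
  have hn := hnu (xorf b (aQf C0 C1 o)).
  set n := nu _ in hn *.
  transitivity (sig C m * sig C m * (sig C m * sig C m) * ((C1 q b)^* * C1 q' b) * (n * n^*)); first by ring.
  by rewrite hn mulr1.
under eq_bigr do rewrite step.
rewrite sum_const_C card_FF mulrA.
have -> : ((4 ^ m)%N%:R : C) * (sig C m * sig C m * (sig C m * sig C m)) = 1.
  have -> : (4 ^ m)%N = (2 ^ m * 2 ^ m)%N by rewrite -expnMn.
  rewrite natrM; transitivity ((sig C m * sig C m * (2 ^ m)%:R) * (sig C m * sig C m * (2 ^ m)%:R)).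
    by ring.
  by rewrite sig2 mulr1.
by rewrite mul1r.
Qed.



Lemma detch_tp (C : numClosedFieldType) (I J : finType) (h : I -> J) (i i' : I) :
  \sum_(e : I) \sum_(j : J) (((i == e)%:R * (j == h e)%:R : C))^* * ((i' == e)%:R * (j == h e)%:R)
  = (i == i')%:R.
Proof.
rewrite (@sum_single _ _ i); last first.
  by move=> e ne; apply: big1 => j _; rewrite eq_sym (negPf ne) mul0r rmorph0 mul0r.
rewrite (@sum_single _ _ (h i)); last first.
  by move=> j ne; rewrite (negPf ne) mulr0 rmorph0 mul0r.
by rewrite !eqxx rmorphM /= !rmorph_nat !mulr1 mul1r eq_sym.
Qed.

Definition detch (C : numClosedFieldType) (I J : finType) (h : I -> J) : channel C I J :=
  @Channel C I J I (fun e j i => (i == e)%:R * (j == h e)%:R) (@detch_tp C I J h).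

Definition A1k (C : numClosedFieldType) n m (C0 C1 : bits m -> bits m -> C) (x : bits n)
  (k : bits m) (j : ((FF m * (bits n * bits m)) * bits m)%type) (i : (bits m * unit)%type) : C :=
  (j.1.2 == (x, k))%:R * (j.2 == k)%:R * amp1 C0 C1 k j.1.1 i.1.

Lemma A1_tp (C : numClosedFieldType) n m (C0 C1 : bits m -> bits m -> C) (x : bits n) :
  unitary C0 -> unitary C1 ->
  forall i i', \sum_(k : bits m) \sum_j (A1k C0 C1 x k j i)^* * A1k C0 C1 x k j i' = (i == i')%:R.
Proof.
move=> h0 h1 [qa []] [qa' []].
rewrite xpair_eqE eqxx andbT.
have e k : \sum_j (A1k C0 C1 x k j (qa, tt))^* * A1k C0 C1 x k j (qa', tt)
   = \sum_oi (amp1 C0 C1 k oi qa)^* * amp1 C0 C1 k oi qa'.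
  rewrite sum_pair (sum_pair (fun p => \sum_b _)).
  apply: eq_bigr => oi _.
  rewrite (@sum_single _ _ (x, k)); last first.
    by move=> ma ne; apply: big1 => ka _; rewrite /A1k /= (negPf ne) !mul0r rmorph0 mul0r.
  rewrite (@sum_single _ _ k); last first.
    by move=> ka ne; rewrite /A1k /= (negPf ne) !mulr0 !mul0r rmorph0 mul0r.
  by rewrite /A1k /= !eqxx !mul1r.
under eq_bigr do rewrite e sum_FF.
have e2 k a t : (amp1 C0 C1 k (fJ a t) qa)^* * amp1 C0 C1 k (fJ a t) qa'
   = (sig C m * sig C m * (C0 qa a * (C0 qa' a)^*)) * ((wv C0 C1 k t)^* * wv C0 C1 k t).
  by rewrite /amp1 fAJ fEJ !rmorphM /= !conjCK sig_conj; ring.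
under eq_bigr do under eq_bigr do under eq_bigr do rewrite e2.
rewrite exchange_big /=.
under eq_bigr do (under eq_bigr do rewrite -big_distrr /= w_orth // eqxx; rewrite -big_distrr /=).
under eq_bigr do rewrite sum_const_C card_bits mulr1 mulrAC sig2 mul1r.
exact: (unitary_r h0).
Qed.

Definition A1ch (C : numClosedFieldType) n m (C0 C1 : bits m -> bits m -> C)
  (h0 : unitary C0) (h1 : unitary C1) (x : bits n) :
  channel C (bits m * unit)%type ((FF m * (bits n * bits m)) * bits m)%type :=
  @Channel C _ _ (bits m) (A1k C0 C1 x) (A1_tp x h0 h1).

Lemma psi1_norm (C : numClosedFieldType) :
  \sum_(ra : unit) \sum_(rb : unit) (fun _ _ => 1 : C) ra rb * ((fun _ _ => 1 : C) ra rb)^* = 1.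
Proof. by rewrite !sum_unit rmorph1 mulr1. Qed.

Definition Prot (C : numClosedFieldType) n m (f : bits n -> bits n -> bool)
  (C0 C1 : bits m -> bits m -> C) (h0 : unitary C0) (h1 : unitary C1) :
  oprotocol C (bits n) (bits n) (bits m) (FF m) (FF m) (bits m) (bits m) :=
  @OProtocol C (bits n) (bits n) (bits m) (FF m) (FF m) (bits m) (bits m)
    unit unit (bits n * bits m)%type (bits n) (bits m) unit
    (fun _ _ => 1) (psi1_norm C)
    (A1ch h0 h1)
    (fun y => @detch C _ _ (fun _ : unit => (y, tt)))
    (fun x o => @detch C _ _ (fun p : (bits m * bits n)%type => hh C0 C1 (f x p.2) o p.1))
    (fun y o => @detch C _ _ (fun p : (unit * (bits n * bits m))%type => hh C0 C1 (f p.2.1 y) o p.2.2)).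


Lemma kraus_form (C : numClosedFieldType) n m (f : bits n -> bits n -> bool)
  (C0 C1 : bits m -> bits m -> C) (h0 : unitary C0) (h1 : unitary C1)
  (x y : bits n) (e1 : bits m) (e2 : unit) (o : FF m)
  (e3 : (bits m * bits n)%type) (e4 : (unit * (bits n * bits m))%type)
  (zz : (bits m * bits m)%type) (qa : bits m) :
  @oprot_kraus C _ _ _ _ _ _ _ (Prot f h0 h1) f (@bell_oracle_vec C m) x y e1 e2 o e3 e4 zz qa
  = (e3 == (e1, y))%:R * (e4 == (tt, (x, e1)))%:R *
    ((zz == (hh C0 C1 (f x y) o e1, hh C0 C1 (f x y) o e1))%:R * Amp C0 C1 (f x y) e1 o qa).
Proof.
rewrite /oprot_kraus /= !sum_unit /Amp !big_distrr /=; apply: eq_bigr => oi _.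
rewrite (@sum_single _ _ (x, e1)); last first.
  move=> ma ne; apply: big1 => ka _; apply: big1 => mb _; apply: big1 => kb _.
  by rewrite /A1k /= (negPf ne) /= ?mulr0n ?mul0r ?mulr0 ?mul0r ?mulr0.
rewrite (@sum_single _ _ e1); last first.
  move=> ka ne; apply: big1 => mb _; apply: big1 => kb _.
  rewrite /A1k /= (negPf ne) /= ?mulr0n ?mul0r ?mulr0 ?mul0r ?mulr0. by rewrite !mul0r.
rewrite (@sum_single _ _ y); last first.
  move=> mb ne; apply: big1 => kb _.
  by rewrite xpair_eqE (negPf ne) /= ?mulr0n ?mul0r ?mulr0 ?mul0r ?mulr0.
rewrite sum_unit /A1k /= !eqxx !mul1r !mulr1.
have [->|ne3] := eqVneq e3 (e1, y); last first.
  by rewrite /= !mul0r.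
have [->|ne4] := eqVneq e4 (tt, (x, e1)); last first.
  by rewrite /= !mulr0n !mul1r !mul0r !mulr0 !mul0r.
case: zz => z1 z2 /=.
rewrite !mul1r xpair_eqE -mulnb natrM.
ring.
Qed.



Lemma output_form (C : numClosedFieldType) n m (f : bits n -> bits n -> bool)
  (C0 C1 : bits m -> bits m -> C) (h0 : unitary C0) (h1 : unitary C1)
  (x y : bits n) (rho : bits m -> bits m -> C) (zz ww : (bits m * bits m)%type) :
  oprot_output (Prot f h0 h1) f (@bell_oracle_vec C m) x y rho zz ww
  = \sum_(k : bits m) \sum_(o : FF m)
      (zz == (hh C0 C1 (f x y) o k, hh C0 C1 (f x y) o k))%:R *
      (ww == (hh C0 C1 (f x y) o k, hh C0 C1 (f x y) o k))%:R *
      \sum_qa \sum_qa' Amp C0 C1 (f x y) k o qa * rho qa qa' * (Amp C0 C1 (f x y) k o qa')^*.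
Proof.
rewrite /oprot_output; apply: eq_bigr => k _.
rewrite sum_unit; apply: eq_bigr => o _.
rewrite (@sum_single _ _ (k, y)); last first.
  move=> e3 ne; apply: big1 => e4 _; apply: big1 => qa _; apply: big1 => qa' _.
  by rewrite !kraus_form (negPf ne) !mul0r.
rewrite (@sum_single _ _ (tt, (x, k))); last first.
  move=> e4 ne; apply: big1 => qa _; apply: big1 => qa' _.
  by rewrite !kraus_form (negPf ne) !mulr0 !mul0r.
rewrite big_distrr /=; apply: eq_bigr => qa _.
rewrite big_distrr /=; apply: eq_bigr => qa' _.
rewrite !kraus_form !eqxx !rmorphM /= !rmorph_nat.
ring.
Qed.

Lemma sum_swap4 (C : numClosedFieldType) (A B D E : finType) (F : A -> B -> D -> E -> C) :
  \sum_a \sum_b \sum_d \sum_e F a b d e = \sum_d \sum_e \sum_a \sum_b F a b d e.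
Proof.
under eq_bigr do rewrite exchange_big /=.
rewrite exchange_big /=; apply: eq_bigr => d _.
under eq_bigr do under eq_bigr do idtac.
under eq_bigr do rewrite exchange_big /=.
by rewrite exchange_big.
Qed.

Lemma per_b (C : numClosedFieldType) m (C0 C1 : bits m -> bits m -> C) (g : bool) b q q' :
  unitary C0 -> unitary C1 ->
  (forall a b, exists c a' b', clif_prop C0 a b a' b' c) ->
  (forall a b, exists c a' b', clif_prop C1 a b a' b' c) ->
  \sum_k \sum_o (hh C0 C1 g o k == b)%:R *
     (Amp C0 C1 g k o q * (Amp C0 C1 g k o q')^*)
  = ((if g then C1 else C0) q b)^* * (if g then C1 else C0) q' b.
Proof.
move=> h0 h1 hc0 hc1; case: g; first exact: per_b_true.
exact: per_b_false.
Qed.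

Theorem mainTheorem19 (C : numClosedFieldType) (n nA : nat)
    (f : bits n -> bits n -> bool) (C0 C1 : bits nA -> bits nA -> C) :
  clifford C0 -> clifford C1 ->
  exists P : oprotocol C (bits n) (bits n) (bits nA)
               {ffun 'I_nA -> (bool * bool)%type}
               {ffun 'I_nA -> (bool * bool)%type}
               (bits nA) (bits nA),
    forall (x y : bits n) (rho : bits nA -> bits nA -> C)
           (zz ww : (bits nA * bits nA)%type),
      oprot_output P f (@bell_oracle_vec C nA) x y rho zz ww
      = clifford_measure (if f x y then C1 else C0) rho zz ww.
Proof.
move=> [h0 hc0] [h1 hc1].
exists (Prot f h0 h1) => x y rho zz ww.
rewrite output_form /clifford_measure.
set g := f x y.
set Cg := if g then C1 else C0.
transitivity (\sum_(k : bits nA) \sum_(o : FF nA) \sum_(b : bits nA)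
   (hh C0 C1 g o k == b)%:R *
   ((zz == (b, b))%:R * (ww == (b, b))%:R *
      \sum_qa \sum_qa' Amp C0 C1 g k o qa * rho qa qa' * (Amp C0 C1 g k o qa')^*)).
  apply: eq_bigr => k _; apply: eq_bigr => o _.
  by rewrite sum_delta'.
rewrite exchange_big /=.
under eq_bigr do rewrite exchange_big /=.
rewrite exchange_big /=.
apply: eq_bigr => b _.
have -> : (((zz.1 == b) && (zz.2 == b) && (ww.1 == b) && (ww.2 == b))%:R : C)
   = (zz == (b, b))%:R * (ww == (b, b))%:R.
  by case: zz => z1 z2; case: ww => w1 w2; rewrite !xpair_eqE -natrM mulnb !andbA.
under eq_bigr do under eq_bigr do rewrite mulrCA.
under eq_bigr do rewrite -big_distrr /=.
rewrite -big_distrr /=; congr (_ * _).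
rewrite exchange_big /=.
under eq_bigr do under eq_bigr do rewrite big_distrr /=.
under eq_bigr do under eq_bigr do under eq_bigr do rewrite big_distrr /=.
rewrite sum_swap4; apply: eq_bigr => q _; apply: eq_bigr => q' _.
transitivity (rho q q' * ((Cg q b)^* * Cg q' b)); last by ring.
rewrite /Cg /g -(per_b _ _ _ _ h0 h1 hc0 hc1) big_distrr /=; apply: eq_bigr => k _.
rewrite big_distrr /=; apply: eq_bigr => o _.
ring.
Qed.
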